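(* Let $k\ge 2$ be an integer. Then $\frac{k}{k+1}\le f(k,2)\le \frac{k+1}{k+2+\frac{1}{k+1}}$.
   Context: For a graph $G=(V,E)$ and an integer $k\ge 0$, a $k$-independent set is a set $S\subseteq V$ such that the induced subgraph $G[S]$ has maximum degree at most $k$; $\alpha_k(G)$ denotes the maximum cardinality of a $k$-independent set of $G$. $n(G)$ is the number of vertices and $d(G)=2|E(G)|/n(G)$ the average degree. For integers $d,k\ge 0$, $f(k,d)=\inf\left\{\frac{\alpha_k(G)}{n(G)} : G \text{ a finite simple graph with at least one vertex and } d(G)\le d\right\}$. *)

(* Defs.v *)
From mathcomp Require Import all_boot.
From Stdlib Require Import Reals ClassicalEpsilon.

Set Implicit Arguments.
Local Open Scope R_scope.
Unset Strict Implicit.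
Unset Printing Implicit Defensive.

Definition simple_graph (T : finType) (e : rel T) : Prop :=
  symmetric e /\ irreflexive e.

Definition k_independent (k : nat) (T : finType) (e : rel T) (S : {set T}) : bool :=
  [forall x in S, (#|[set y in S | e x y]| <= k)%nat].

Definition alpha_k (k : nat) (T : finType) (e : rel T) : nat :=
  \max_(S : {set T} | k_independent k e S) #|S|.

Definition num_edges (T : finType) (e : rel T) : nat :=
  #|[set A : {set T} | (#|A| == 2%nat) &&
       [exists x, exists y, (A == [set x; y]) && e x y]]|.

Definition avg_degree (T : finType) (e : rel T) : R :=
  (2 * INR (num_edges e) / INR #|T|).

Definition ratio_set (k d : nat) (r : R) : Prop :=
  exists (T : finType) (e : rel T),
    simple_graph e /\ (0 < #|T|)%nat /\ (avg_degree e <= INR d) /\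
    r = (INR (alpha_k k e) / INR #|T|).

Definition is_inf (P : R -> Prop) (r : R) : Prop :=
  (forall x, P x -> (r <= x)) /\ (forall b, (forall x, P x -> (b <= x)) -> (b <= r)).

Definition f_kd (k d : nat) : R :=
  epsilon (inhabits R0) (fun r => is_inf (ratio_set k d) r).

(* Main.v *)
Require Import Defs.
From Stdlib Require Import Reals.
From mathcomp Require Import all_boot.
From Stdlib Require Import Lra Lia ClassicalEpsilon.
From mathcomp Require Import zify.
Set Implicit Arguments.
Unset Strict Implicit.


Section G.
Variables (T : finType) (e : rel T).
Hypothesis esym : symmetric e.
Hypothesis eirr : irreflexive e.

Lemma sum_bool_card (A : {set T}) (b : pred T) :
  \sum_(x in A) (b x : nat) = #|[set x in A | b x]|.
Proof.
rewrite -sum1_card.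
have -> : \sum_(x in [set x in A | b x]) 1 = \sum_(x | (x \in A) && b x) 1.
  by apply: eq_bigl => x; rewrite !inE.
rewrite big_mkcondr /=; apply: eq_bigr => x _; by case: (b x).
Qed.

Definition deg (S : {set T}) (x : T) := #|[set y in S | e x y]|.
Definition psi (S : {set T}) := \sum_(x in S) deg S x.

Lemma psi_remove (S : {set T}) (v : T) : v \in S ->
  psi S = psi (S :\ v) + (deg S v).*2.
Proof.
move=> vS; rewrite /psi (bigD1 v) //=.
have H : forall x, x \in S :\ v -> deg S x = e x v + deg (S :\ v) x.
  move=> x xS; rewrite /deg (cardsD1 v); congr (_ + _).
    by rewrite inE vS.
  by apply: eq_card => y; rewrite !inE; case: (y == v); rewrite ?andbF //.
rewrite (eq_bigl (fun x => x \in S :\ v)); last by move=> x; rewrite !inE andbC.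
rewrite (eq_bigr _ H) big_split /= sum_bool_card.
have -> : #|[set x in S :\ v | e x v]| = deg S v.
  rewrite /deg; apply: eq_card => y; rewrite !inE esym.
  case: (boolP (y == v)) => [/eqP ->|]; by rewrite ?eirr ?andbF.
rewrite -addnn; lia.
Qed.

Lemma greedy (k : nat) : forall n (S : {set T}), #|S| <= n ->
  exists S' : {set T}, [/\ S' \subset S, k_independent k e S' &
     ((k.+1 * #|S|).*2 <= (k.+1 * #|S'|).*2 + psi S)%nat].
Proof.
elim=> [|n IH] S hS.
  exists S; split => //; last by lia.
  apply/forall_inP => x xS; have : 0 < #|S| by apply/card_gt0P; exists x.
  lia.
case: (boolP (k_independent k e S)) => [hk|].
  by exists S; split => //; lia.
move/forall_inPn => [v vS]; rewrite -ltnNge => hv.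
have hS' : #|S :\ v| <= n by move: hS; rewrite (cardsD1 v S) vS; lia.
have [S' [sub ki ineq]] := IH _ hS'.
exists S'; split => //.
  by apply: subset_trans sub _; apply: subsetDl.
rewrite (@psi_remove S v vS); move: ineq; rewrite (cardsD1 v S) vS.
rewrite /deg in hv *. lia.
Qed.
End G.
Section G2.
Variables (T : finType) (e : rel T).
Hypothesis esym : symmetric e.
Hypothesis eirr : irreflexive e.

Definition rk (x : T) : nat := enum_rank x.

Lemma psiT : psi e setT = #|[set p : T * T | e p.1 p.2]|.
Proof.
rewrite /psi /deg.
rewrite (eq_bigr (fun x => \sum_(y in setT) (e x y : nat))); last first.
  by move=> x _; rewrite sum_bool_card.
rewrite (eq_bigl xpredT); last by move=> x; rewrite inE.
rewrite (eq_bigr (fun x => \sum_y (e x y : nat))); last first.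
  by move=> x _; apply: eq_bigl => y; rewrite inE.
rewrite pair_bigA /=.
transitivity (#|[set x in [set: T*T] | e x.1 x.2]|).
  by rewrite -sum_bool_card; apply: eq_bigl => p; rewrite inE.
by apply: eq_card => p; rewrite !inE.
Qed.

Lemma rk_inj : injective rk.
Proof. move=> x y h; apply: enum_rank_inj; apply: val_inj; exact: h. Qed.

Lemma psi_edges : psi e setT <= (num_edges e).*2.
Proof.
rewrite psiT.
set P1 := [set p : T * T | e p.1 p.2 && (rk p.1 < rk p.2)].
set P2 := [set p : T * T | e p.1 p.2 && (rk p.2 < rk p.1)].
have h1 : #|[set p : T * T | e p.1 p.2]| <= #|P1| + #|P2|.
  apply: leq_trans (leq_card_setU _ _) .
  apply: subset_leq_card; apply/subsetP => -[x y]; rewrite !inE /= => exy.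
  rewrite exy /=; case: (ltngtP (rk x) (rk y)) => // /rk_inj exy'.
  by move: exy; rewrite exy' eirr.
have h2 : #|P2| = #|P1|.
  have -> : P2 = [set (p.2, p.1) | p in P1].
    apply/setP => -[x y]; rewrite !inE /=; apply/idP/imsetP.
      move=> /andP[a b]; exists (y, x) => //; by rewrite inE /= esym a.
    by move=> [[a b]]; rewrite inE /= => /andP[g1 g2] [-> ->]; rewrite esym g1.
  by apply: card_imset => -[a b] [c d] /= [-> ->].
have h3 : #|P1| <= num_edges e.
  rewrite -(@card_in_imset _ _ (fun p : T * T => [set p.1; p.2])); last first.
    move=> [a b] [c d]; rewrite /P1 !inE /= => /andP[_ hab] /andP[_ hcd] heq.
    have ha : a \in [set c; d] by rewrite -heq set21.
    have hb : b \in [set c; d] by rewrite -heq set22.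
    have hc : c \in [set a; b] by rewrite heq set21.
    move: ha hb hc; rewrite !in_set2.
    case/orP=> /eqP ha; case/orP=> /eqP hb; case/orP=> /eqP hc; subst; try lia; by [].
  apply: subset_leq_card; apply/subsetP => A /imsetP [[a b]]; rewrite /P1 inE /= => /andP[hab _] ->.
  rewrite inE cards2.
  have -> : a != b by apply/eqP => hh; move: hab; rewrite hh eirr.
  apply/existsP; exists a; apply/existsP; exists b; by rewrite eqxx.
lia.
Qed.
End G2.

Notation VT' k := (option ('I_k.+1 * 'I_k.+2)%type).
Section H.
Variable k : nat.
Local Notation VT := (VT' k).
Definition ge (x y : VT) : bool :=
  match x, y with
  | Some (i,a), Some (j,b) => (i == j) && (a != b) && ((val a == 0) || (val b == 0))
  | None, Some (j,_) => val j == 0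
  | Some (i,_), None => val i == 0
  | None, None => false
  end.

Lemma ge_sym : symmetric ge.
Proof.
move=> [[i a]|] [[j b]|] //=; rewrite eq_sym [b == a]eq_sym; by case: (val a == 0); case: (val b == 0); rewrite ?andbT ?andbF.
Qed.

Lemma ge_irr : irreflexive ge.
Proof. by move=> [[i a]|] //=; rewrite !eqxx. Qed.

Lemma sum_bool (I : finType) (q : pred I) : #|[set z | q z]| = \sum_z (q z : nat).
Proof.
rewrite -sum1_card big_mkcond /=; apply: eq_bigr => z _; rewrite inE; by case: (q z).
Qed.

Lemma countT (p : pred VT) : #|[set y | p y]| =
  p None + \sum_(i < k.+1) (p (Some (i, ord0)) + \sum_(b < k.+1) p (Some (i, lift ord0 b))).
Proof.
rewrite (cardsD1 None) inE; congr (_ + _).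
have -> : [set y | p y] :\ None = Some @: [set z | p (Some z)].
  apply/setP => -[z|]; rewrite !inE /=.
    apply/idP/imsetP; first by move=> h; exists z => //; rewrite inE.
    by move=> [w]; rewrite inE => h [->].
  by apply/esym/negbTE/imsetP => -[w].
rewrite card_imset; last by move=> a b [].
rewrite sum_bool (eq_bigr (fun z => (p (Some (z.1, z.2)) : nat))); last by move=> [].
rewrite -(pair_bigA _ (fun i b => (p (Some (i, b)) : nat))) /=.
apply: eq_bigr => i _; by rewrite big_ord_recl.
Qed.
End H.

Section H2.
Variable k : nat.
Local Notation VT := (VT' k).
Notation ge := (@ge k).

Definition hE (t : VT) : {set VT} :=
  match t with
  | Some (i, b) => if val b != 0 then [set Some (i, ord0); Some (i, b)]
                   else if val i != 0 then [set None; Some (ord0, inord i)]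
                   else [set None; Some (ord0, ord_max)]
  | None => [set None; Some (ord0, ord0)]
  end.

Lemma hcover1 (x y : VT) : ge x y -> x = None \/ (exists p, x = Some p /\ exists q, y = Some q) ->
  exists t, hE t = [set x; y].
Proof.
move: x y => [[i a]|] [[j b]|] //=.
- move=> /andP[/andP[/eqP <- ab] h] _.
  case/orP: h => [a0|b0].
    have ea : a = ord0 by apply: val_inj; apply/eqP.
    exists (Some (i, b)) => /=.
    have -> : (val b != 0) = true; last by rewrite ea.
    apply/negP => /eqP hb; move/negP: ab; apply; apply/eqP/val_inj; by rewrite /= hb (eqP a0).
  have eb : b = ord0 by apply: val_inj; apply/eqP.
  exists (Some (i, a)) => /=.
  have -> : (val a != 0) = true; last by rewrite setUC eb.
  apply/negP => /eqP ha; move/negP: ab; apply; apply/eqP/val_inj; by rewrite /= ha (eqP b0).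
- by move=> _ [//|[p [_ [q //]]]].
- move=> j0 _; have -> : j = ord0 by apply: val_inj; apply/eqP.
  case: (boolP (val b == 0)) => b0.
    by exists None => /=; have -> : b = ord0 by apply: val_inj; apply/eqP.
  case: (ltnP (val b) k.+1) => hb.
    exists (Some (inord (val b), ord0)) => /=.
    rewrite inordK //. rewrite b0 /=. 
    congr [set _; Some (_, _)]; apply: val_inj; by rewrite /= inordK // ltnW.
  exists (Some (ord0, ord0)) => /=.
  congr [set _; Some (_, _)]; apply: val_inj => /=.
  by apply/eqP; rewrite eqn_leq hb -ltnS ltn_ord.
Qed.

Lemma hcover (x y : VT) : ge x y -> exists t, hE t = [set x; y].
Proof.
move=> hxy; case: x hxy => [p|] hxy.
  case: y hxy => [q|] hxy.
    apply: hcover1 => //; right; by exists p; split => //; exists q.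
  have [t ht] := @hcover1 None (Some p) ltac:(by rewrite ge_sym) (or_introl erefl).
  by exists t; rewrite ht setUC.
exact: hcover1 hxy (or_introl erefl).
Qed.

Lemma edges_le : num_edges ge <= #|{: VT}|.
Proof.
rewrite /num_edges -cardsT; apply: leq_trans (leq_imset_card hE [set: VT]).
apply: subset_leq_card; apply/subsetP => A; rewrite inE => /andP[_ /existsP[x /existsP[y /andP[/eqP -> hxy]]]].
have [t ht] := hcover hxy; apply/imsetP; exists t => //; by rewrite inE.
Qed.

Lemma cardVT : #|{: VT}| = (k.+1 * k.+2).+1.
Proof. by rewrite card_option card_prod !card_ord. Qed.
End H2.

Section H3.
Variable k : nat.
Local Notation VT := (VT' k).
Variable S : {set VT}.
Hypothesis hS : k_independent k (@ge k) S.

Definition L (i : 'I_k.+1) : nat := \sum_(b < k.+1) (Some (i, lift ord0 b) \in S : nat).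

Lemma L_le i : L i <= k.+1.
Proof.
rewrite /L; apply: leq_trans (_ : \sum_(b < k.+1) 1 <= k.+1).
  by apply: leq_sum => b _; case: (_ \in S).
by rewrite sum1_card card_ord.
Qed.

Lemma degS (x : VT) : #|[set y in S | ge x y]| = #|[set y | (y \in S) && ge x y]|.
Proof. by apply: eq_card => y; rewrite !inE. Qed.

Lemma deg_hub (i : 'I_k.+1) : Some (i, ord0) \in S ->
  ((None \in S) && (val i == 0)) + L i <= k.
Proof.
move=> hi; move/forall_inP: hS => /(_ _ hi); rewrite degS countT /=.
apply: leq_trans; rewrite leq_add2l (bigD1 i) //= eqxx /= andbF add0n.
apply: leq_trans _ (leq_addr _ _).
rewrite /L; apply: eq_leq; apply: eq_bigr => b _; by rewrite andbT.
Qed.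

Lemma deg_none : None \in S -> (Some (ord0, ord0) \in S : nat) + L ord0 <= k.
Proof.
move=> hi; move/forall_inP: hS => /(_ _ hi); rewrite degS countT /=.
apply: leq_trans; rewrite andbF add0n (bigD1 ord0) //=.
apply: leq_trans _ (leq_addr _ _).
rewrite andbT; apply: leq_add => //.
rewrite /L; apply: eq_leq; apply: eq_bigr => b _; by rewrite andbT.
Qed.

Lemma alpha_S : #|S| <= k.+1 * k.+1.
Proof.
have -> : #|S| = #|[set y | y \in S]| by apply: eq_card => y; rewrite inE.
rewrite countT big_ord_recl addnA.
have g0 : (None \in S : nat) + ((Some (ord0, ord0) \in S : nat) + L ord0) <= k.+1.
  case: (boolP (None \in S)) => hN; case: (boolP (Some (ord0, ord0) \in S)) => hH /=.
  - by have := deg_hub hH; rewrite hN /=; lia.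
  - by have := deg_none hN; rewrite (negbTE hH) /=; lia.
  - by have := deg_hub hH; rewrite (negbTE hN) /=; lia.
  - by have := L_le ord0; lia.
have gi : forall i : 'I_k, (Some (lift ord0 i, ord0) \in S : nat) + L (lift ord0 i) <= k.+1.
  move=> i; case: (boolP (Some (lift ord0 i, ord0) \in S)) => hH /=.
    by have := deg_hub hH; lia.
  by have := L_le (lift ord0 i); lia.
have : \sum_(i < k) ((Some (lift ord0 i, ord0) \in S : nat) + L (lift ord0 i)) <= \sum_(i < k) k.+1.
  by apply: leq_sum => i _; apply: gi.
rewrite sum_nat_const card_ord.
move=> h; rewrite -/(L _); apply: leq_trans (leq_add g0 h) _; by rewrite mulSn.
Qed.
End H3.

Lemma lower_nat (k : nat) (T : finType) (e : rel T) : simple_graph e ->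
  num_edges e <= #|T| -> k * #|T| <= k.+1 * alpha_k k e.
Proof.
move=> [hs hi] hE.
have [S' [_ ki ineq]] := greedy hs hi k (leqnn #|[set: T]|).
have hp := psi_edges hs hi.
have ha : #|S'| <= alpha_k k e by rewrite /alpha_k; apply: (@leq_bigmax_cond _ _ _ S').
move: ineq hp; rewrite cardsT => ineq hp.
have : k.+1 * #|S'| <= k.+1 * alpha_k k e by rewrite leq_mul2l ha orbT.
move: ineq hp hE; nia.
Qed.

Lemma alpha_ub (k : nat) : alpha_k k (@ge k) <= k.+1 * k.+1.
Proof. by apply/bigmax_leqP => S hS; apply: alpha_S. Qed.

Local Open Scope R_scope.

Lemma ratio_le (a b c d : nat) : (0 < b)%nat -> (0 < d)%nat -> (a * d <= c * b)%nat ->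
  INR a / INR b <= INR c / INR d.
Proof.
move=> hb hd h.
have Hb : 0 < INR b by apply: lt_0_INR; apply/ltP.
have Hd : 0 < INR d by apply: lt_0_INR; apply/ltP.
replace (INR a / INR b) with (INR a * INR d / (INR b * INR d)) by (field; lra).
replace (INR c / INR d) with (INR c * INR b / (INR b * INR d)) by (field; lra).
apply: Rmult_le_compat_r.
  by left; apply: Rinv_0_lt_compat; apply: Rmult_lt_0_compat.
rewrite -!mult_INR; apply: le_INR; apply/leP; exact: h.
Qed.

Lemma inf_exists (P : R -> Prop) (b : R) : (exists x, P x) -> (forall x, P x -> b <= x) ->
  exists r, is_inf P r.
Proof.
move=> [x0 hx0] hb.
have hB : bound (fun x => P (- x)).
  exists (- b) => x hx; have := hb _ hx; lra.
have hN : exists x, P (- x) by exists (- x0); rewrite Ropp_involutive.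
have [m [hub hl]] := completeness _ hB hN.
exists (- m); split.
  move=> x hx; have : - x <= m by apply: hub; rewrite Ropp_involutive.
  lra.
move=> b' hb'.
have : m <= - b' by apply: hl => x hx; have := hb' _ hx; lra.
lra.
Qed.

Lemma example_in (k : nat) : ratio_set k 2 (INR (alpha_k k (@ge k)) / INR #|{: VT' k}|).
Proof.
exists (VT' k : finType); exists (@ge k); split; first by split; [apply: ge_sym | apply: ge_irr].
split; first by rewrite cardVT.
split => //.
rewrite /avg_degree.
have hn : 0 < INR #|{: VT' k}| by apply: lt_0_INR; apply/ltP; rewrite cardVT.
have hE : INR (num_edges (@ge k)) <= INR #|{: VT' k}| by apply: le_INR; apply/leP; apply: edges_le.
apply: (Rmult_le_reg_r (INR #|{: VT' k}|)) => //.
rewrite /Rdiv Rmult_assoc Rinv_l; last by apply: Rgt_not_eq.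
rewrite Rmult_1_r (_ : INR 2 = 2); last by simpl; lra.
apply: Rmult_le_compat_l; [lra | exact: hE].
Qed.

Theorem mainTheorem13 (k : nat) (hk : (2 <= k)%nat) :
  INR k / INR (k + 1)%nat <= f_kd k 2 /\
  f_kd k 2 <= INR (k + 1)%nat / (INR (k + 2)%nat + 1 / INR (k + 1)%nat).
Proof.
have hlow : forall x, ratio_set k 2 x -> INR k / INR (k + 1)%nat <= x.
  move=> x [T [e [hs [hn [ha ->]]]]].
  have hn' : 0 < INR #|T| by apply: lt_0_INR; apply/ltP.
  have hE : (num_edges e <= #|T|)%nat.
    have h2 := Rmult_le_compat_r (INR #|T|) _ _ (Rlt_le _ _ hn') ha.
    move: h2; rewrite /avg_degree /Rdiv Rmult_assoc Rinv_l; last by apply: Rgt_not_eq.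
    rewrite Rmult_1_r (_ : INR 2 = 2); last by simpl; lra.
    move=> h2; apply/leP; apply: INR_le; lra.
  apply: ratio_le => //; first by lia.
  have := lower_nat k hs hE; lia.
have hex := example_in k.
have [r hr] := inf_exists (ex_intro _ _ hex) hlow.
have hf : is_inf (ratio_set k 2) (f_kd k 2).
  exact: (epsilon_spec (inhabits R0) _ (ex_intro _ r hr)).
split; first by apply: hf.2 hlow.
apply: Rle_trans (hf.1 _ hex) _.
have -> : INR (k + 1)%nat / (INR (k + 2)%nat + 1 / INR (k + 1)%nat) =
   INR (k.+1 * k.+1) / INR (k.+1 * k.+2).+1.
  have h1 : 0 < INR (k + 1)%nat by apply: lt_0_INR; apply/ltP; lia.
  have h2 : 0 < INR (k + 2)%nat by apply: lt_0_INR; apply/ltP; lia.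
  have e1 : INR (k.+1 * k.+1) = INR (k + 1)%nat * INR (k + 1)%nat.
    by rewrite -mult_INR; congr INR; lia.
  have e2 : INR (k.+1 * k.+2).+1 = INR (k + 1)%nat * INR (k + 2)%nat + 1.
    by rewrite -mult_INR -S_INR; congr INR; lia.
  rewrite e1 e2; field; split; try lra.
  apply: Rgt_not_eq; have : 0 < INR (k + 1)%nat * INR (k + 2)%nat by apply: Rmult_lt_0_compat.
  lra.
apply: ratio_le; first by rewrite cardVT.
  by [].
have := alpha_ub k; rewrite cardVT; nia.
Qed.
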